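(* Let $p\ge1$, $m=2p$, $N>M\ge0$, let $\beta(0),\dots,\beta(N)$ be $p\times m$ matrices with $\beta(k)J\beta(k)^*=I_p$, put $C_k=2K^*\beta(k)^*\beta(k)K-j$, and consider the system $W_{k+1}(\lambda)-W_k(\lambda)=-\frac{i}{\lambda}jC_kW_k(\lambda)$, $W_0=I_m$. Then $\mathcal N(N)\subset\mathcal N(M)$.
   Context: $\mathbb C_-$ is the open lower half-plane; $j=\mathrm{diag}(I_p,-I_p)$, $J=\begin{bmatrix}0&I_p\\ I_p&0\end{bmatrix}$, $K=\frac1{\sqrt2}\begin{bmatrix}I_p&-I_p\\ I_p&I_p\end{bmatrix}$. For $L\le N$ let $\mathcal W(L,\lambda)=\{\mathcal W_{ij}(L,\lambda)\}_{i,j=1}^2=KW_{L+1}(\bar\lambda)^*$ ($p\times p$ blocks), and let $\mathcal N(L)$ be the set of $p\times p$ matrix functions $\varphi$ holomorphic in $\mathbb C_-$ of the form $\varphi=i(\mathcal W_{21}(L,\cdot)R+\mathcal W_{22}(L,\cdot)Q)(\mathcal W_{11}(L,\cdot)R+\mathcal W_{12}(L,\cdot)Q)^{-1}$, where $R,Q$ are $p\times p$ matrix functions meromorphic in $\mathbb C_-$, well defined at $\lambda=-i$, with $R^*R+Q^*Q>0$ and $R^*R\le Q^*Q$ (Weyl functions on the interval $0\le k\le L$). *)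

(* Defs.v *)
From HB Require Import structures.
From mathcomp Require Import all_boot all_order all_algebra.
From mathcomp Require Import reals.
From mathcomp Require Import complex.
Set Implicit Arguments. Unset Strict Implicit. Unset Printing Implicit Defensive.
Import Order.TTheory GRing.Theory Num.Theory.
Local Open Scope ring_scope.
Local Open Scope complex_scope.

Section Defs.
Variable R : realType.
Local Notation C := R[i].

Definition adjmx m n (A : 'M[C]_(m, n)) : 'M[C]_(n, m) := (map_mx Num.conj A)^T.

Definition lowerHP (z : C) : Prop := complex.Im z < 0.

Definition mx_holo_at m n (f : C -> 'M[C]_(m, n)) (z : C) : Prop :=
  exists D : 'M[C]_(m, n), forall e : R, 0 < e ->
    exists d : R, 0 < d /\ forall w : C, `|w - z| < d%:C ->
      forall i j, `|f w i j - f z i j - (w - z) * D i j| <= e%:C * `|w - z|.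

Definition mx_holo_on m n (Dom : C -> Prop) (f : C -> 'M[C]_(m, n)) : Prop :=
  forall z, Dom z -> mx_holo_at f z.

(* f is holomorphic in a neighbourhood of z ("well defined" at z) *)
Definition mx_regular_at m n (f : C -> 'M[C]_(m, n)) (z : C) : Prop :=
  exists r : R, 0 < r /\ forall w : C, `|w - z| < r%:C -> mx_holo_at f w.

Definition mx_mero_on m n (Dom : C -> Prop) (f : C -> 'M[C]_(m, n)) : Prop :=
  forall z0, Dom z0 -> exists (k : nat) (r : R) (G : C -> 'M[C]_(m, n)),
    0 < r /\ (forall w : C, `|w - z0| < r%:C -> mx_holo_at G w) /\
    (forall w : C, 0 < `|w - z0| < r%:C -> f w = (w - z0) ^- k *: G w).

Definition discrete_in (Dom S : C -> Prop) : Prop :=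
  forall z, Dom z -> exists r : R, 0 < r /\
    forall w, S w -> 0 < `|w - z| < r%:C -> False.

Definition posdefmx n (H : 'M[C]_n) : Prop :=
  forall v : 'cV[C]_n, v != 0 -> 0 < (adjmx v *m H *m v) 0 0.
Definition psdmx n (H : 'M[C]_n) : Prop :=
  forall v : 'cV[C]_n, 0 <= (adjmx v *m H *m v) 0 0.

Variable p : nat.

Definition jmx : 'M[C]_(p + p) := block_mx 1%:M 0 0 (- 1%:M).
Definition Jmx : 'M[C]_(p + p) := block_mx 0 1%:M 1%:M 0.
Definition Kmx : 'M[C]_(p + p) :=
  (sqrtC (2 : C))^-1 *: block_mx 1%:M (- 1%:M) 1%:M 1%:M.

Variable beta : nat -> 'M[C]_(p, p + p).

Definition Cmx (k : nat) : 'M[C]_(p + p) :=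
  2%:R *: (adjmx Kmx *m adjmx (beta k) *m beta k *m Kmx) - jmx.

Fixpoint Wmx (k : nat) (l : C) : 'M[C]_(p + p) :=
  match k with
  | 0 => 1%:M
  | k'.+1 => Wmx k' l - ('i / l) *: (jmx *m Cmx k' *m Wmx k' l)
  end.

Definition calW (L : nat) (l : C) : 'M[C]_(p + p) :=
  Kmx *m adjmx (Wmx L.+1 (Num.conj l)).

Definition WeylSet (L : nat) (phi : C -> 'M[C]_p) : Prop :=
  mx_holo_on lowerHP phi /\
  exists Rf Qf : C -> 'M[C]_p,
    mx_mero_on lowerHP Rf /\ mx_mero_on lowerHP Qf /\
    mx_regular_at Rf (- 'i) /\ mx_regular_at Qf (- 'i) /\
    (forall l, lowerHP l -> mx_regular_at Rf l -> mx_regular_at Qf l ->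
       posdefmx (adjmx (Rf l) *m Rf l + adjmx (Qf l) *m Qf l) /\
       psdmx (adjmx (Qf l) *m Qf l - adjmx (Rf l) *m Rf l)) /\
    exists S : C -> Prop, discrete_in lowerHP S /\
      forall l, lowerHP l -> ~ S l ->
        mx_regular_at Rf l /\ mx_regular_at Qf l /\
        let D := ulsubmx (calW L l) *m Rf l + ursubmx (calW L l) *m Qf l in
        let U := dlsubmx (calW L l) *m Rf l + drsubmx (calW L l) *m Qf l in
        D \in unitmx /\ phi l = 'i *: (U *m invmx D).

End Defs.

(* Main.v *)
Require Import Defs.
From HB Require Import structures.
From mathcomp Require Import all_boot all_order all_algebra.
From mathcomp Require Import reals.
From mathcomp Require Import complex.
From mathcomp Require Import ring lra.
From Stdlib Require Import ClassicalEpsilon.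
Import Order.TTheory GRing.Theory Num.Theory.
Local Open Scope ring_scope.
Local Open Scope complex_scope.
Set Implicit Arguments. Unset Strict Implicit. Unset Printing Implicit Defensive.

Section Analysis.
Variable R : realType.
Local Notation C := R[i].

Definition nc (z : C) : R := Num.sqrt (complex.Re z ^+ 2 + complex.Im z ^+ 2).
Lemma normE (x : C) : `|x| = (nc x)%:C. Proof. exact: normc_def. Qed.
Lemma nc_ge0 (x : C) : 0 <= nc x. Proof. exact: sqrtr_ge0. Qed.
Lemma ncRe (x : C) : nc x = complex.Re `|x|. Proof. by rewrite normE. Qed.
Lemma ncM (x y : C) : nc (x * y) = nc x * nc y.
Proof. by rewrite ncRe normrM !normE -rmorphM. Qed.
Lemma ncD (x y : C) : nc (x + y) <= nc x + nc y.
Proof. have := ler_normD x y; by rewrite !normE -rmorphD lecR. Qed.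
Lemma ncN (x : C) : nc (- x) = nc x.
Proof. by rewrite ncRe normrN -ncRe. Qed.
Lemma ncB (x y : C) : nc (x - y) = nc (y - x).
Proof. by rewrite -ncN opprB. Qed.
Lemma ncV (x : C) : nc (x^-1) = (nc x)^-1.
Proof. by rewrite ncRe normfV normE -fmorphV. Qed.
Lemma nc_eq0 (x : C) : (nc x == 0) = (x == 0).
Proof.
apply/idP/idP => [/eqP h|/eqP ->].
  by rewrite -normr_eq0 normE h.
by rewrite ncRe normr0.
Qed.
Lemma nc1 : nc 1 = 1. Proof. by rewrite ncRe normr1. Qed.
Lemma ncX (x : C) k : nc (x ^+ k) = nc x ^+ k.
Proof. elim: k => [|k IH]; first by rewrite !expr0 nc1. by rewrite !exprS ncM IH. Qed.
Lemma nc_gt0 (x : C) : (0 < nc x) = (x != 0).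
Proof. by rewrite lt_def nc_eq0 nc_ge0 andbT. Qed.
Lemma nc0 : nc 0 = 0. Proof. by apply/eqP; rewrite nc_eq0. Qed.
Lemma ncDB (x y : C) : nc x <= nc y + nc (x - y).
Proof. by have := ncD y (x - y); rewrite addrC subrK addrC. Qed.

Lemma le_conv (x y : C) (e : R) : (`|x| <= e%:C * `|y|) = (nc x <= e * nc y).
Proof. by rewrite !normE -rmorphM lecR. Qed.
Lemma lt_conv (x : C) (d : R) : (`|x| < d%:C) = (nc x < d).
Proof. by rewrite normE ltcR. Qed.

Definition shR (g : C -> C) (z : C) := exists d : C, forall e : R, 0 < e ->
  exists dl : R, 0 < dl /\ forall w, nc (w - z) < dl ->
    nc (g w - g z - (w - z) * d) <= e * nc (w - z).

Lemma fin_delta (T : finType) (P : T -> R -> Prop) :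
  (forall t d d', 0 < d' -> d' <= d -> P t d -> P t d') ->
  (forall t, exists d, 0 < d /\ P t d) -> exists d, 0 < d /\ forall t, P t d.
Proof.
move=> mon H.
suff [d [d0 Hd]] : exists d, 0 < d /\ forall t, t \in enum T -> P t d.
  by exists d; split => // t; apply: Hd; rewrite mem_enum.
elim: (enum T) => [|x s [d [d0 Hd]]]; first by exists 1.
have [dx [dx0 Hx]] := H x.
exists (Num.min dx d); split; first by rewrite lt_min dx0 d0.
move=> t; rewrite in_cons => /orP [/eqP ->|ts].
  by apply: (mon _ dx) => //; [rewrite lt_min dx0 d0 | rewrite ge_min lexx].
by apply: (mon _ d) => //; [rewrite lt_min dx0 d0 | rewrite ge_min lexx orbT | apply: Hd].
Qed.

Lemma holoE m n (f : C -> 'M[C]_(m, n)) z :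
  mx_holo_at f z <-> forall i j, shR (fun w => f w i j) z.
Proof.
split.
  move=> [D HD] i j; exists (D i j) => e e0.
  have [dl [dl0 H]] := HD e e0; exists dl; split => // w hw.
  by rewrite -le_conv; apply: H; rewrite lt_conv.
move=> H.
pose D := \matrix_(i, j) proj1_sig (constructive_indefinite_description _ (H i j)).
exists D => e e0.
have := @fin_delta _
  (fun (t : 'I_m * 'I_n) dl => forall w, nc (w - z) < dl ->
    nc (f w t.1 t.2 - f z t.1 t.2 - (w - z) * D t.1 t.2) <= e * nc (w - z)).
case.
- move=> t d d' d0 le H1 w hw; apply: H1; exact: lt_le_trans hw le.
- move=> [i j]; rewrite /D mxE /=.
  case: (constructive_indefinite_description _ (H i j)) => d /= Hd.
  exact: Hd.
move=> dl [dl0 Hdl]; exists dl; split => // w hw i j.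
by rewrite le_conv; apply: (Hdl (i, j)); rewrite -lt_conv.
Qed.


Lemma shR_ext (g h : C -> C) z : (forall w, g w = h w) -> shR h z -> shR g z.
Proof. move=> E [d Hd]; exists d => e e0; have [dl [dl0 H]] := Hd e e0.
by exists dl; split => // w hw; rewrite !E; apply: H. Qed.

Lemma shR_ball (g h : C -> C) z r : 0 < r -> (forall w, nc (w - z) < r -> g w = h w) ->
  shR h z -> shR g z.
Proof.
move=> r0 E [d Hd]; exists d => e e0; have [dl [dl0 H]] := Hd e e0.
exists (Num.min dl r); split; first by rewrite lt_min dl0 r0.
move=> w; rewrite lt_min => /andP [h1 h2].
rewrite !E //; first by apply: H.
by rewrite subrr nc0.
Qed.

Lemma shR_const (c : C) z : shR (fun _ => c) z.
Proof. exists 0 => e e0; exists 1; split => // w _.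
by rewrite subrr mulr0 subr0 nc0 mulr_ge0 ?nc_ge0 // ltW. Qed.

Lemma shR_id z : shR (fun w => w) z.
Proof. exists 1 => e e0; exists 1; split => // w _.
by rewrite mulr1 subrr nc0 mulr_ge0 ?nc_ge0 // ltW. Qed.

Lemma shR_add (g h : C -> C) z : shR g z -> shR h z -> shR (fun w => g w + h w) z.
Proof.
move=> [d1 H1] [d2 H2]; exists (d1 + d2) => e e0.
have e20 : 0 < e / 2 by rewrite divr_gt0.
have [l1 [l10 L1]] := H1 _ e20; have [l2 [l20 L2]] := H2 _ e20.
exists (Num.min l1 l2); split; first by rewrite lt_min l10 l20.
move=> w; rewrite lt_min => /andP [h1 h2].
have -> : g w + h w - (g z + h z) - (w - z) * (d1 + d2) =
   (g w - g z - (w - z) * d1) + (h w - h z - (w - z) * d2) by ring.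
apply: le_trans (ncD _ _) _.
have := L1 w h1; have := L2 w h2; lra.
Qed.

Lemma shR_cont (g : C -> C) z : shR g z -> exists dl K, 0 < dl /\ 0 <= K /\
  forall w, nc (w - z) < dl -> nc (g w - g z) <= K * nc (w - z).
Proof.
move=> [d H]; have [dl [dl0 L]] := H 1 ltr01.
exists dl, (1 + nc d); split => //; split; first by have := nc_ge0 d; lra.
move=> w hw.
have -> : g w - g z = (g w - g z - (w - z) * d) + (w - z) * d by ring.
have := L w hw; move=> h; apply: le_trans (ncD _ _) _; rewrite ncM.
have := nc_ge0 (w - z); have := nc_ge0 d; nra.
Qed.

Lemma div3K (e a : R) : 0 < a -> e / (3 * a) * a = e / 3.
Proof. move=> a0; rewrite invfM mulrA -mulrA mulVf ?mulr1 //; lra. Qed.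

Lemma shR_mul (g h : C -> C) z : shR g z -> shR h z -> shR (fun w => g w * h w) z.
Proof.
move=> Hg Hh; have [l0 [K [l00 [K0 HK]]]] := shR_cont Hh.
move: Hg Hh => [d1 H1] [d2 H2].
exists (d1 * h z + g z * d2) => e e0.
set A := nc (g z); set B := nc (h z); set D1 := nc d1.
have A0 : 0 <= A by apply: nc_ge0.
have B0 : 0 <= B by apply: nc_ge0.
have D10 : 0 <= D1 by apply: nc_ge0.
pose e1 := e / (3 * (B + 1)); pose e2 := e / (3 * (A + 1)).
have e10 : 0 < e1 by rewrite divr_gt0 // mulr_gt0 //; lra.
have e20 : 0 < e2 by rewrite divr_gt0 // mulr_gt0 //; lra.
have F1 : e1 * (B + 1) = e / 3 by rewrite /e1 div3K //; lra.
have F2 : A * e2 <= e / 3.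
  have : e2 * (A + 1) = e / 3 by rewrite /e2 div3K //; lra.
  nra.
have [l1 [l10 L1]] := H1 _ e10; have [l2 [l20 L2]] := H2 _ e20.
have K1 : 0 < K + 1 by lra.
have D0 : 0 < D1 * (K + 1) + 1 by nra.
pose l3 := 1 / (K + 1); pose l4 := e / (3 * (D1 * (K + 1) + 1)).
have l30 : 0 < l3 by rewrite divr_gt0.
have l40 : 0 < l4 by rewrite divr_gt0 // mulr_gt0 //; lra.
exists (Num.min l0 (Num.min l1 (Num.min l2 (Num.min l3 l4)))); split.
  by rewrite !lt_min l00 l10 l20 l30 l40.
move=> w; rewrite !lt_min => /andP [h0 /andP [h1 /andP [h2 /andP [h3 h4]]]].
set t := nc (w - z).
have t0 : 0 <= t by apply: nc_ge0.
have -> : g w * h w - g z * h z - (w - z) * (d1 * h z + g z * d2) =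
  (g w - g z - (w - z) * d1) * h w + g z * (h w - h z - (w - z) * d2)
  + (w - z) * d1 * (h w - h z) by ring.
have E1 : nc (g w - g z - (w - z) * d1) <= e1 * t := L1 w h1.
have E2 : nc (h w - h z - (w - z) * d2) <= e2 * t := L2 w h2.
have EK : nc (h w - h z) <= K * t := HK w h0.
have h3' : t < l3 := h3.
have h4' : t < l4 := h4.

have T3 : (K + 1) * t <= 1.
  have e3 : l3 * (K + 1) = 1 by rewrite /l3 mul1r mulVf //; lra.
  rewrite -[X in _ <= X]e3 [_ * t]mulrC ler_pM2r //; exact: ltW.
have T4 : D1 * (K + 1) * t <= e / 3.
  have e4 : l4 * (D1 * (K + 1) + 1) = e / 3 by rewrite /l4 div3K.
  rewrite -[X in _ <= X]e4 [_ * t]mulrC; apply: ler_pM => //; [by apply: mulr_ge0; lra|by apply: ltW|lra].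
have Hw : nc (h w) <= B + 1.
  have := ncDB (h w) (h z); rewrite -/B; nra.
apply: le_trans (ncD _ _) _; apply: le_trans (lerD (ncD _ _) (lexx _)) _.
rewrite !ncM -/A -/D1 -/t.
set r1 := nc (g w - g z - (w - z) * d1) in E1 *.
set r2 := nc (h w - h z - (w - z) * d2) in E2 *.
set q := nc (h w - h z) in EK *.
have r10 : 0 <= r1 by apply: nc_ge0.
have r20 : 0 <= r2 by apply: nc_ge0.
have q0 : 0 <= q by apply: nc_ge0.
have hw0 : 0 <= nc (h w) by apply: nc_ge0.
have S1 : r1 * nc (h w) <= e / 3 * t.
  apply: le_trans (_ : e1 * t * (B + 1) <= _).
    by apply: ler_pM => //.
  by rewrite mulrAC F1.
have S2 : A * r2 <= e / 3 * t.
  apply: le_trans (_ : A * (e2 * t) <= _); first by apply: ler_pM.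
  by rewrite mulrA; apply: ler_pM => //; apply: mulr_ge0 => //; apply: ltW.
have S3 : t * D1 * q <= e / 3 * t.
  apply: le_trans (_ : t * D1 * (K * t) <= _); first by apply: ler_pM => //; apply: mulr_ge0.
  nra.
lra.
Qed.


Lemma shR_inv (c z : C) : z != c -> shR (fun w => (w - c)^-1) z.
Proof.
move=> zc; set v := z - c.
have v0 : v != 0 by rewrite subr_eq0.
set n := nc v; have n0 : 0 < n by rewrite nc_gt0.
exists (- (v ^+ 2)^-1) => e e0.
exists (Num.min (n / 2) (e * n ^+ 3 / 2)); split.
  by rewrite lt_min !divr_gt0 // ?mulr_gt0 // exprn_gt0.
move=> w; rewrite lt_min => /andP [h1 h2].
set u := w - c.
have Hu : n <= nc u + nc (w - z).
  have := ncDB v u; have -> : v - u = z - w by rewrite /v /u; ring.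
  by rewrite ncB.
have u2 : n / 2 <= nc u by lra.
have u0 : u != 0 by rewrite -nc_gt0; lra.
have -> : u^-1 - v^-1 - (w - z) * - (v ^+ 2)^-1 = (w - z) ^+ 2 / (u * v ^+ 2).
  have -> : w - z = u - v by rewrite /u /v; ring.
  by field; rewrite u0 v0.
rewrite ncM ncV !ncM -/n.
set t := nc (w - z).
have t0 : 0 <= t by apply: nc_ge0.
have ht : t <= e * (n * (n * n)) / 2 by move: h2; rewrite /t !exprS expr0 mulr1 => /ltW.
have pu : 0 < nc u * (n * n) by rewrite mulr_gt0 // ?mulr_gt0 // nc_gt0.
rewrite ler_pdivrMr //.
have : t * t <= t * (e * (n * (n * n)) / 2) by apply: ler_wpM2l.
have : e * t * (n / 2 * (n * n)) <= e * t * (nc u * (n * n)).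
  apply: ler_wpM2l; first by rewrite mulr_ge0 // ltW.
  by apply: ler_wpM2r => //; rewrite mulr_ge0 // ltW.
have -> : e * t * (n / 2 * (n * n)) = t * (e * (n * (n * n)) / 2) by ring.
move=> A1 A2; apply: le_trans A2 _; apply: le_trans A1 _.
by rewrite -mulrA.
Qed.

Lemma shR_seqsum (I : Type) (s : seq I) (F : I -> C -> C) z :
  (forall k, shR (F k) z) -> shR (fun w => \sum_(k <- s) F k w) z.
Proof.
move=> H; elim: s => [|x s IH].
  by apply: (@shR_ext _ (fun _ => 0)) => [w|]; [rewrite big_nil | apply: shR_const].
apply: (@shR_ext _ (fun w => F x w + \sum_(k <- s) F k w)).
  by move=> w; rewrite big_cons.
exact: shR_add.
Qed.

Lemma shR_sum n (F : 'I_n -> C -> C) z :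
  (forall k, shR (F k) z) -> shR (fun w => \sum_(k < n) F k w) z.
Proof. move=> H; exact: (shR_seqsum (index_enum _) H). Qed.

Lemma shR_exp (g : C -> C) z k : shR g z -> shR (fun w => g w ^+ k) z.
Proof.
move=> H; elim: k => [|k IH].
  by apply: (@shR_ext _ (fun _ => 1)) => [w|]; [rewrite expr0 | apply: shR_const].
apply: (@shR_ext _ (fun w => g w * g w ^+ k)); first by move=> w; rewrite exprS.
exact: shR_mul.
Qed.

Lemma mh_ext m n (f g : C -> 'M[C]_(m, n)) z :
  (forall w, f w = g w) -> mx_holo_at g z -> mx_holo_at f z.
Proof. move=> E [D HD]; exists D => e e0; have [d [d0 H]] := HD e e0.
by exists d; split => // w hw i j; rewrite !E; apply: H. Qed.

Lemma mh_ball m n (f g : C -> 'M[C]_(m, n)) z r : 0 < r ->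
  (forall w, nc (w - z) < r -> f w = g w) -> mx_holo_at g z -> mx_holo_at f z.
Proof.
move=> r0 E /holoE H; apply/holoE => i j.
apply: (shR_ball r0 _ (H i j)) => w hw; by rewrite E.
Qed.

Lemma mh_const m n (A : 'M[C]_(m, n)) z : mx_holo_at (fun _ => A) z.
Proof. apply/holoE => i j; exact: shR_const. Qed.

Lemma mh_add m n (f g : C -> 'M[C]_(m, n)) z :
  mx_holo_at f z -> mx_holo_at g z -> mx_holo_at (fun w => f w + g w) z.
Proof.
move=> /holoE Hf /holoE Hg; apply/holoE => i j.
apply: (@shR_ext _ (fun w => f w i j + g w i j)); first by move=> w; rewrite mxE.
exact: shR_add.
Qed.

Lemma mh_mul m n k (f : C -> 'M[C]_(m, n)) (g : C -> 'M[C]_(n, k)) z :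
  mx_holo_at f z -> mx_holo_at g z -> mx_holo_at (fun w => f w *m g w) z.
Proof.
move=> /holoE Hf /holoE Hg; apply/holoE => i j.
apply: (@shR_ext _ (fun w => \sum_(l < n) f w i l * g w l j)); first by move=> w; rewrite mxE.
apply: shR_sum => l; exact: shR_mul.
Qed.

Lemma mh_scale m n (g : C -> C) (f : C -> 'M[C]_(m, n)) z :
  shR g z -> mx_holo_at f z -> mx_holo_at (fun w => g w *: f w) z.
Proof.
move=> Hg /holoE Hf; apply/holoE => i j.
apply: (@shR_ext _ (fun w => g w * f w i j)); first by move=> w; rewrite mxE.
exact: shR_mul.
Qed.

Lemma mh_usub m1 m2 n (f : C -> 'M[C]_(m1 + m2, n)) z :
  mx_holo_at f z -> mx_holo_at (fun w => usubmx (f w)) z.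
Proof.
move=> /holoE Hf; apply/holoE => i j.
apply: (@shR_ext _ (fun w => f w (lshift m2 i) j)); first by move=> w; rewrite mxE.
exact: Hf.
Qed.

Lemma mh_dsub m1 m2 n (f : C -> 'M[C]_(m1 + m2, n)) z :
  mx_holo_at f z -> mx_holo_at (fun w => dsubmx (f w)) z.
Proof.
move=> /holoE Hf; apply/holoE => i j.
apply: (@shR_ext _ (fun w => f w (rshift m1 i) j)); first by move=> w; rewrite mxE.
exact: Hf.
Qed.

Lemma mh_col m1 m2 n (f : C -> 'M[C]_(m1, n)) (g : C -> 'M[C]_(m2, n)) z :
  mx_holo_at f z -> mx_holo_at g z -> mx_holo_at (fun w => col_mx (f w) (g w)) z.
Proof.
move=> /holoE Hf /holoE Hg; apply/holoE => i j.
case: (split_ordP i) => k ->.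
  apply: (@shR_ext _ (fun w => f w k j)); first by move=> w; rewrite col_mxEu.
  exact: Hf.
apply: (@shR_ext _ (fun w => g w k j)); first by move=> w; rewrite col_mxEd.
exact: Hg.
Qed.

End Analysis.

Section Alg.
Variable R : realType.
Local Notation C := R[i].

Lemma adjmxM m n k (A : 'M[C]_(m, n)) (B : 'M[C]_(n, k)) :
  adjmx (A *m B) = adjmx B *m adjmx A.
Proof. by rewrite /adjmx map_mxM trmx_mul. Qed.
Lemma adjmxD m n (A B : 'M[C]_(m, n)) : adjmx (A + B) = adjmx A + adjmx B.
Proof. by rewrite /adjmx map_mxD linearD. Qed.
Lemma adjmxN m n (A : 'M[C]_(m, n)) : adjmx (- A) = - adjmx A.
Proof. by rewrite /adjmx map_mxN linearN. Qed.
Lemma adjmxB m n (A B : 'M[C]_(m, n)) : adjmx (A - B) = adjmx A - adjmx B.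
Proof. by rewrite adjmxD adjmxN. Qed.
Lemma adjmxZ m n (c : C) (A : 'M[C]_(m, n)) : adjmx (c *: A) = Num.conj c *: adjmx A.
Proof. by rewrite /adjmx map_mxZ linearZ. Qed.
Lemma adjmx1 n : adjmx (1%:M : 'M[C]_n) = 1%:M.
Proof. by rewrite /adjmx map_mx1 trmx1. Qed.
Lemma adjmx0 m n : adjmx (0 : 'M[C]_(m, n)) = 0.
Proof. by rewrite /adjmx map_mx0 trmx0. Qed.
Lemma adjmxK m n (A : 'M[C]_(m, n)) : adjmx (adjmx A) = A.
Proof. by apply/matrixP => i j; rewrite /adjmx !mxE conjCK. Qed.
Lemma adjmx_block m1 m2 n1 n2 (A : 'M[C]_(m1, n1)) (B : 'M[C]_(m1, n2))
  (Cc : 'M[C]_(m2, n1)) (D : 'M[C]_(m2, n2)) :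
  adjmx (block_mx A B Cc D) = block_mx (adjmx A) (adjmx Cc) (adjmx B) (adjmx D).
Proof. by rewrite /adjmx map_block_mx tr_block_mx. Qed.
Lemma adjmx_col m1 m2 n (A : 'M[C]_(m1, n)) (B : 'M[C]_(m2, n)) :
  adjmx (col_mx A B) = row_mx (adjmx A) (adjmx B).
Proof. by rewrite /adjmx map_col_mx tr_col_mx. Qed.
End Alg.

Section Main.
Variable R : realType.
Local Notation C := R[i].
Variable p : nat.
Variable beta : nat -> 'M[C]_(p, p + p).
Local Notation j := (jmx R p).
Local Notation K := (Kmx R p).

Lemma jmx_adj : adjmx j = j.
Proof. by rewrite /jmx adjmx_block adjmxN !adjmx1 !adjmx0. Qed.
Lemma jmx_sq : j *m j = 1%:M.
Proof.
rewrite /jmx mulmx_block !mulmx0 !mul0mx !mulmx1 !addr0 !add0r mulmxN mulNmx mulmx1 opprK.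
by rewrite -scalar_mx_block.
Qed.
Lemma Kj : K *m j *m adjmx K = Jmx R p.
Proof.
rewrite /Kmx adjmxZ adjmx_block adjmxN !adjmx1.
set s := (sqrtC 2)^-1.
have sr : Num.conj s = s.
  apply: conj_Creal; apply: ger0_real; rewrite invr_ge0 sqrtC_ge0 ler0n //.
rewrite sr -!scalemxAl -scalemxAr scalerA /jmx !mulmx_block.
rewrite !(mulmx1, mul1mx, mulmx0, mul0mx, mulmxN, mulNmx, opprK, oppr0, addr0, add0r, sub0r, subrr).
have ss : s * s + s * s = 1.
  rewrite /s -invfM -expr2 sqrtCK.
  by field.
rewrite (scale_block_mx (s * s)) scaler0 scalerDr -scalerDl ss scale1r.
by [].
Qed.

Definition gam k := beta k *m K.
Local Notation Cm := (Cmx beta).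

Lemma Cform k : Cm k = 2%:R *: (adjmx (gam k) *m gam k) - j.
Proof. by rewrite /Cmx /gam adjmxM !mulmxA. Qed.

Lemma gjg k : beta k *m Jmx R p *m adjmx (beta k) = 1%:M ->
  gam k *m j *m adjmx (gam k) = 1%:M.
Proof.
move=> h; rewrite /gam adjmxM.
have -> : beta k *m K *m j *m (adjmx K *m adjmx (beta k)) =
  beta k *m (K *m j *m adjmx K) *m adjmx (beta k) by rewrite !mulmxA.
by rewrite Kj.
Qed.

Lemma Cherm k : adjmx (Cm k) = Cm k.
Proof.
rewrite Cform adjmxB adjmxZ adjmxM adjmxK jmx_adj.
by rewrite (conj_Creal (@realn _ 2)).
Qed.

Lemma CjC k : beta k *m Jmx R p *m adjmx (beta k) = 1%:M ->
  Cm k *m j *m Cm k = j.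
Proof.
move=> /gjg h; rewrite Cform; set G := adjmx (gam k) *m gam k.
have GjG : G *m j *m G = G.
  rewrite /G.
  have -> : adjmx (gam k) *m gam k *m j *m (adjmx (gam k) *m gam k) =
    adjmx (gam k) *m (gam k *m j *m adjmx (gam k)) *m gam k by rewrite !mulmxA.
  by rewrite h mulmx1.
have E1 : (2%:R *: G - j) *m j = 2%:R *: (G *m j) - 1%:M.
  by rewrite mulmxBl -scalemxAl jmx_sq.
rewrite E1 mulmxBl !mulmxBr -!scalemxAl -!scalemxAr !mul1mx scalerA.
rewrite GjG -mulmxA jmx_sq mulmx1.
have -> : (2%:R * 2%:R) *: G = 2%:R *: G + 2%:R *: G :> 'M[C]_(p + p).
  by rewrite -scalerDl; congr (_ *: _); ring.
rewrite addrK; by rewrite opprB addrC subrK.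
Qed.

Lemma X2 k : beta k *m Jmx R p *m adjmx (beta k) = 1%:M ->
  (Cm k *m j) *m (Cm k *m j) = 1%:M.
Proof. by move=> h; rewrite !mulmxA (CjC h) jmx_sq. Qed.

Lemma conj_i : Num.conj ('i : C) = - 'i.
Proof. by apply/eqP; rewrite eq_complex /= oppr0 !eqxx. Qed.

Lemma conj_div (x y : C) : Num.conj (x / y) = Num.conj x / Num.conj y.
Proof. change (conjc (x / y) = conjc x / conjc y). by rewrite rmorphM fmorphV. Qed.

Definition Fk k (l : C) : 'M[C]_(p + p) := 1%:M + ('i / l) *: (Cm k *m j).

Lemma Wstep k (l : C) :
  adjmx (Wmx beta k.+1 (Num.conj l)) = adjmx (Wmx beta k (Num.conj l)) *m Fk k l.
Proof.
rewrite /=.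
set W := Wmx beta k (Num.conj l).
have -> : W - ('i / Num.conj l) *: (j *m Cm k *m W) =
   (1%:M - ('i / Num.conj l) *: (j *m Cm k)) *m W.
  by rewrite mulmxBl mul1mx -scalemxAl.
rewrite adjmxM adjmxB adjmx1 adjmxZ adjmxM Cherm jmx_adj /Fk.
congr (_ *m _).
rewrite conj_div conj_i conjCK mulNr scaleNr opprK //.
Qed.

Fixpoint Pr (M n : nat) (l : C) : 'M[C]_(p + p) :=
  match n with
  | 0 => 1%:M
  | n'.+1 => Pr M n' l *m Fk (M + n').+1 l
  end.

Lemma calW_step L l : calW beta L.+1 l = calW beta L l *m Fk L.+1 l.
Proof. by rewrite /calW (Wstep L.+1 l) mulmxA. Qed.

Lemma calW_Pr M n l : calW beta (M + n) l = calW beta M l *m Pr M n l.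
Proof.
elim: n => [|n IH]; first by rewrite addn0 mulmx1.
by rewrite addnS calW_step IH -mulmxA.
Qed.

Definition cf (w : C) : C := w ^+ 2 * ((2%:R * 'i)^-1 * ((w - 'i)^-1 - (w - - 'i)^-1)).
Definition Finv k (w : C) : 'M[C]_(p + p) := cf w *: (1%:M - ('i / w) *: (Cm k *m j)).

Lemma i_neq0 : ('i : C) != 0.
Proof. by rewrite eq_complex /= oner_eq0 andbF. Qed.

Lemma cfE (w : C) : w != 0 -> w - 'i != 0 -> w - - 'i != 0 ->
  cf w * (1 - ('i / w) ^+ 2) = 1.
Proof.
move=> w0 w1 w2; rewrite /cf.
have i0 := i_neq0.
have t0 : (2%:R : C) != 0 by rewrite pnatr_eq0.
by field; rewrite w0 w1 w2 i0.
Qed.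


Lemma FinvF k (w : C) : beta k *m Jmx R p *m adjmx (beta k) = 1%:M ->
  w != 0 -> w - 'i != 0 -> w - - 'i != 0 -> Finv k w *m Fk k w = 1%:M.
Proof.
move=> h w0 w1 w2; rewrite /Finv /Fk -scalemxAl.
set a := 'i / w; set X := Cm k *m j.
have -> : (1%:M - a *: X) *m (1%:M + a *: X) = (1 - a ^+ 2) *: 1%:M.
  rewrite mulmxBl !mulmxDr !mul1mx !mulmx1 -!scalemxAl -scalemxAr scalerA.
  rewrite /X (X2 h) -/X opprD addrA addrK scalerBl scale1r expr2 //.
by rewrite scalerA cfE // scale1r.
Qed.

Fixpoint Tr (M n : nat) (l : C) : 'M[C]_(p + p) :=
  match n with
  | 0 => 1%:M
  | n'.+1 => Finv (M + n').+1 l *m Tr M n' l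
  end.

Lemma TrPr M n (w : C) : (forall k, (M < k <= M + n)%N ->
    beta k *m Jmx R p *m adjmx (beta k) = 1%:M) ->
  w != 0 -> w - 'i != 0 -> w - - 'i != 0 -> Tr M n w *m Pr M n w = 1%:M.
Proof.
move=> h w0 w1 w2; elim: n h => [|n IH] h; first by rewrite /= mulmx1.
rewrite /= mulmxA -(mulmxA (Finv _ w)) IH ?mulmx1 ?FinvF //.
  by apply: h; rewrite addnS ltnS leq_addr leqnn.
move=> k /andP [a b]; apply: h; rewrite a /=; rewrite addnS; exact: leqW.
Qed.


Lemma entD m n (A B : 'M[C]_(m, n)) i k : (A + B) i k = A i k + B i k.
Proof. by rewrite mxE. Qed.
Lemma entZ m n (c : C) (A : 'M[C]_(m, n)) i k : (c *: A) i k = c * A i k.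
Proof. by rewrite mxE. Qed.
Lemma entN m n (A : 'M[C]_(m, n)) i k : (- A) i k = - A i k.
Proof. by rewrite mxE. Qed.

Lemma form_vec k (a : C) (u : 'cV[C]_(p + p)) :
  beta k *m Jmx R p *m adjmx (beta k) = 1%:M ->
  (adjmx ((1%:M + a *: (Cm k *m j)) *m u) *m j *m ((1%:M + a *: (Cm k *m j)) *m u)) 0 0 =
  (1 - a) * Num.conj (1 - a) * (adjmx u *m j *m u) 0 0 +
  2%:R * (a + Num.conj a) *
    (adjmx (gam k *m j *m u) *m (gam k *m j *m u)) 0 0.
Proof.
move=> h.
set G := adjmx (gam k) *m gam k.
set q := (adjmx u *m j *m u) 0 0.
set z := (adjmx (gam k *m j *m u) *m (gam k *m j *m u)) 0 0.
have ez : z = (adjmx u *m (j *m G *m j) *m u) 0 0.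
  by rewrite /z /G !adjmxM jmx_adj !mulmxA.
have P1 : j *m Cm k *m j = 2%:R *: (j *m G *m j) - j.
  by rewrite Cform -/G mulmxBr mulmxBl -scalemxAr -scalemxAl jmx_sq mul1mx.
have P2 : j *m Cm k *m j *m Cm k *m j = j.
  have -> : j *m Cm k *m j *m Cm k *m j = j *m (Cm k *m j *m Cm k) *m j by rewrite !mulmxA.
  by rewrite (CjC h) jmx_sq mul1mx.
have T2 : (adjmx u *m (j *m Cm k *m j) *m u) 0 0 = 2%:R * z - q.
  rewrite P1 mulmxBr mulmxBl -scalemxAr -scalemxAl entD entN entZ ez //.
have T4 : (adjmx u *m (j *m Cm k *m j *m Cm k *m j) *m u) 0 0 = q by rewrite P2.
have e1 : (1%:M + a *: (Cm k *m j)) *m u = u + a *: (Cm k *m j *m u).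
  by rewrite mulmxDl mul1mx -scalemxAl.
have e2 : adjmx ((1%:M + a *: (Cm k *m j)) *m u) =
    adjmx u + Num.conj a *: (adjmx u *m (j *m Cm k)).
  by rewrite adjmxM adjmxD adjmx1 adjmxZ adjmxM Cherm jmx_adj mulmxDr mulmx1 -scalemxAr.
rewrite e2 e1; move: T2 T4; move: (Cm k) => Ck T2 T4.
rewrite !(mulmxDl, mulmxDr) !entD -!scalemxAl -!scalemxAr !entZ.
have -> : adjmx u *m j *m (Ck *m j *m u) = adjmx u *m (j *m Ck *m j) *m u by rewrite !mulmxA.
have -> : adjmx u *m (j *m Ck) *m j *m u = adjmx u *m (j *m Ck *m j) *m u by rewrite !mulmxA.
have -> : adjmx u *m (j *m Ck) *m j *m (Ck *m j *m u) =
   adjmx u *m (j *m Ck *m j *m Ck *m j) *m u by rewrite !mulmxA.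
rewrite T2 T4 -/q.
rewrite (_ : Num.conj (1 - a) = 1 - Num.conj a); last by rewrite rmorphB rmorph1.
ring.
Qed.


End Main.
Section M2.
Variable R : realType.
Local Notation C := R[i].
Variable p : nat.
Variable beta : nat -> 'M[C]_(p, p + p).
Local Notation j := (jmx R p).
Local Notation K := (Kmx R p).
Local Notation Cm := (Cmx beta).
Lemma nrmE m (Z : 'cV[C]_m) : (adjmx Z *m Z) 0 0 = \sum_i `|Z i 0| ^+ 2.
Proof.
rewrite mxE; apply: eq_bigr => i _; rewrite /adjmx !mxE normCK mulrC //.
Qed.
Lemma nrm_ge0 m (Z : 'cV[C]_m) : 0 <= (adjmx Z *m Z) 0 0.
Proof. by rewrite nrmE sumr_ge0 // => i _; rewrite exprn_ge0. Qed.
Lemma nrm_eq0 m (Z : 'cV[C]_m) : (adjmx Z *m Z) 0 0 = 0 -> Z = 0.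
Proof.
rewrite nrmE => /psumr_eq0P H; apply/matrixP => i k.
rewrite ord1 mxE; apply/eqP.
have : `|Z i 0| ^+ 2 = 0 by apply: H => // i' _; rewrite exprn_ge0.
by move/eqP; rewrite expf_eq0 /= normr_eq0.
Qed.

Lemma Re_neg (l : C) : complex.Im l < 0 -> 'i / l + Num.conj ('i / l) < 0.
Proof.
move=> hl.
have hr : complex.Re ('i / l) < 0.
  case: l hl => x y /= hy.
  rewrite mul0r mul1r sub0r opprK.
  have n0 : 0 < x ^+ 2 + y ^+ 2.
    rewrite !expr2; nra.
  by rewrite pmulr_llt0 ?invr_gt0.
change ('i / l + conjc ('i / l) < 0).
rewrite addcJ pmulr_rlt0 ?ltr0n //.
change ((complex.Re ('i / l))%:C < (0:R)%:C); by rewrite ltcR.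
Qed.

Lemma step k (l : C) (u : 'cV[C]_(p + p)) :
  beta k *m Jmx R p *m adjmx (beta k) = 1%:M ->
  complex.Im l < 0 -> (adjmx u *m j *m u) 0 0 <= 0 ->
  (adjmx (Fk beta k l *m u) *m j *m (Fk beta k l *m u)) 0 0 <= 0 /\
  (u != 0 -> Fk beta k l *m u != 0).
Proof.
move=> h hl hq.
have E := form_vec ('i / l) u h; rewrite -/(Fk beta k l) in E.
set a := 'i / l in E.
set q := (adjmx u *m j *m u) 0 0 in hq E.
set z := (adjmx (gam beta k *m j *m u) *m (gam beta k *m j *m u)) 0 0 in E.
have c10 : 0 <= (1 - a) * Num.conj (1 - a) by rewrite -normCK exprn_ge0.
have c20 : 2%:R * (a + Num.conj a) < 0 by rewrite pmulr_rlt0 ?ltr0n // Re_neg.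
have z0 : 0 <= z by apply: nrm_ge0.
have A1 : (1 - a) * Num.conj (1 - a) * q <= 0 by apply: mulr_ge0_le0.
have A2 : 2%:R * (a + Num.conj a) * z <= 0 by apply: mulr_le0_ge0 => //; apply: ltW.
split; first by rewrite E; have := lerD A1 A2; rewrite addr0.
move=> u0; apply/eqP => v0.
move: E; rewrite v0 adjmx0 mul0mx mxE big1 => [E|i _]; last by rewrite mxE mul0r.
have e2 : 2%:R * (a + Num.conj a) * z = 0.
  apply/eqP; rewrite eq_le A2 /=.
  have -> : 2%:R * (a + Num.conj a) * z = - ((1 - a) * Num.conj (1 - a) * q).
    by apply/eqP; rewrite -subr_eq0 opprK addrC -E.
  by rewrite oppr_ge0.
have zz : z = 0.
  by move/eqP: e2; rewrite mulf_eq0 (lt_eqF c20) /= => /eqP.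
have Z0 : gam beta k *m j *m u = 0 by apply: nrm_eq0.
have eF : Fk beta k l *m u = (1 - a) *: u.
  rewrite /Fk mulmxDl mul1mx -scalemxAl Cform.
  have -> : (2%:R *: (adjmx (gam beta k) *m gam beta k) - j) *m j *m u =
     2%:R *: (adjmx (gam beta k) *m (gam beta k *m j *m u)) - j *m j *m u.
    by rewrite !mulmxBl -!scalemxAl !mulmxA.
  by rewrite Z0 mulmx0 scaler0 sub0r jmx_sq mul1mx scalerN scalerBl scale1r.
move: v0; rewrite eF => /eqP; rewrite scaler_eq0 (negbTE u0) orbF subr_eq0 => /eqP a1.
have := Re_neg hl; rewrite -/a -a1.
rewrite conjC1 => hh; have := lt_le_trans hh (addr_ge0 ler01 ler01); by rewrite ltxx.
Qed.

Lemma Pr_pos M n (l : C) (u : 'cV[C]_(p + p)) :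
  (forall k, (M < k <= M + n)%N -> beta k *m Jmx R p *m adjmx (beta k) = 1%:M) ->
  complex.Im l < 0 -> (adjmx u *m j *m u) 0 0 <= 0 ->
  (adjmx (Pr beta M n l *m u) *m j *m (Pr beta M n l *m u)) 0 0 <= 0 /\
  (u != 0 -> Pr beta M n l *m u != 0).
Proof.
elim: n u => [|n IH] u h hl hq; first by rewrite /= !mul1mx.
have hk : beta (M + n).+1 *m Jmx R p *m adjmx (beta (M + n).+1) = 1%:M.
  by apply: h; rewrite addnS ltnS leq_addr leqnn.
have [s1 s2] := step hk hl hq.
have h' : forall k, (M < k <= M + n)%N -> beta k *m Jmx R p *m adjmx (beta k) = 1%:M.
  by move=> k /andP [a b]; apply: h; rewrite a /= addnS; exact: leqW.
have [t1 t2] := IH _ h' hl s1.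
have -> : Pr beta M n.+1 l *m u = Pr beta M n l *m (Fk beta (M + n).+1 l *m u).
  by rewrite /= mulmxA.
split => // u0; apply: t2; exact: s2.
Qed.

Lemma HY1 (Y : 'M[C]_(p + p, p)) :
  adjmx (usubmx Y) *m usubmx Y + adjmx (dsubmx Y) *m dsubmx Y = adjmx Y *m Y.
Proof. by rewrite -[in RHS](vsubmxK Y) adjmx_col mul_row_col. Qed.

Lemma HY2 (Y : 'M[C]_(p + p, p)) :
  adjmx (dsubmx Y) *m dsubmx Y - adjmx (usubmx Y) *m usubmx Y = - (adjmx Y *m j *m Y).
Proof.
rewrite -[in RHS](vsubmxK Y) adjmx_col /jmx mul_row_block !mulmx0 !addr0 !add0r.
by rewrite mulmx1 mulmxN mulmx1 mul_row_col mulNmx opprB.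
Qed.

Lemma quadM (Y : 'M[C]_(p + p, p)) (A : 'M[C]_(p + p)) (v : 'cV[C]_p) :
  (adjmx v *m (adjmx Y *m A *m Y) *m v) 0 0 = (adjmx (Y *m v) *m A *m (Y *m v)) 0 0.
Proof. by rewrite adjmxM !mulmxA. Qed.

Lemma quad1 m (Y : 'M[C]_(m, p)) (v : 'cV[C]_p) :
  (adjmx v *m (adjmx Y *m Y) *m v) 0 0 = (adjmx (Y *m v) *m (Y *m v)) 0 0.
Proof. by rewrite adjmxM !mulmxA. Qed.

Lemma pos_transfer M n (l : C) (Rm Qm : 'M[C]_p) :
  (forall k, (M < k <= M + n)%N -> beta k *m Jmx R p *m adjmx (beta k) = 1%:M) ->
  complex.Im l < 0 ->
  posdefmx (adjmx Rm *m Rm + adjmx Qm *m Qm) -> psdmx (adjmx Qm *m Qm - adjmx Rm *m Rm) ->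
  posdefmx (adjmx (usubmx (Pr beta M n l *m col_mx Rm Qm)) *m usubmx (Pr beta M n l *m col_mx Rm Qm)
    + adjmx (dsubmx (Pr beta M n l *m col_mx Rm Qm)) *m dsubmx (Pr beta M n l *m col_mx Rm Qm)) /\
  psdmx (adjmx (dsubmx (Pr beta M n l *m col_mx Rm Qm)) *m dsubmx (Pr beta M n l *m col_mx Rm Qm)
    - adjmx (usubmx (Pr beta M n l *m col_mx Rm Qm)) *m usubmx (Pr beta M n l *m col_mx Rm Qm)).
Proof.
move=> h hl Hpd Hps.
have e1 := HY1 (col_mx Rm Qm); rewrite col_mxKu col_mxKd in e1.
have e2 := HY2 (col_mx Rm Qm); rewrite col_mxKu col_mxKd in e2.
rewrite HY1 HY2.
have key : forall v : 'cV[C]_p,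
   (adjmx (col_mx Rm Qm *m v) *m j *m (col_mx Rm Qm *m v)) 0 0 <= 0.
  move=> v; have := Hps v; rewrite e2 mulmxN mulNmx entN oppr_ge0.
  by rewrite quadM.
have key2 : forall v : 'cV[C]_p, v != 0 -> col_mx Rm Qm *m v != 0.
  move=> v v0; have := Hpd v v0; rewrite e1.
  rewrite quad1; apply: contraTneq => ->.
  by rewrite adjmx0 mul0mx mxE ltxx.
split.
  move=> v v0.
  have [_ t2] := Pr_pos h hl (key v).
  have := t2 (key2 v v0).
  rewrite quad1 mulmxA.
  move=> hz; rewrite lt0r nrm_ge0 andbT; apply: contra hz => /eqP hz.
  by apply/eqP; apply: nrm_eq0.
move=> v; have [t1 _] := Pr_pos h hl (key v).
by rewrite mulmxN mulNmx entN oppr_ge0 quadM -(mulmxA (Pr beta M n l)).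
Qed.

Lemma sh_idiv (z : C) : z != 0 -> shR (fun w => 'i / w) z.
Proof.
move=> z0; apply: (@shR_ext _ _ (fun w => 'i * (w - 0)^-1)); first by move=> w; rewrite subr0.
by apply: shR_mul; [apply: shR_const | apply: shR_inv].
Qed.

Lemma mh_Fk k (z : C) : z != 0 -> mx_holo_at (Fk beta k) z.
Proof.
move=> z0; apply: (@mh_ext _ _ _ _ (fun w => 1%:M + ('i / w) *: (Cm k *m j))) => // .
apply: mh_add; first exact: mh_const.
apply: mh_scale; [exact: sh_idiv | exact: mh_const].
Qed.

Lemma mh_Pr M n (z : C) : z != 0 -> mx_holo_at (Pr beta M n) z.
Proof.
move=> z0; elim: n => [|n IH]; first exact: mh_const.
apply: (@mh_ext _ _ _ _ (fun w => Pr beta M n w *m Fk beta (M + n).+1 w)) => //.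
by apply: mh_mul => //; apply: mh_Fk.
Qed.

Lemma sh_cf (z : C) : z != 0 -> z - 'i != 0 -> z - - 'i != 0 -> shR (@cf R) z.
Proof.
move=> z0 z1 z2.
apply: (@shR_ext _ _ (fun w => w ^+ 2 * ((2%:R * 'i)^-1 * ((w - 'i)^-1 + (-1) * (w - - 'i)^-1)))).
  by move=> w; rewrite /cf mulN1r.
apply: shR_mul; first by apply: shR_exp; apply: shR_id.
apply: shR_mul; first exact: shR_const.
apply: shR_add; first by apply: shR_inv; rewrite -subr_eq0.
apply: shR_mul; first exact: shR_const.
by apply: shR_inv; rewrite -subr_eq0.
Qed.

Lemma mh_Tr M n (z : C) : z != 0 -> z - 'i != 0 -> z - - 'i != 0 ->
  mx_holo_at (Tr beta M n) z.
Proof.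
move=> z0 z1 z2; elim: n => [|n IH]; first exact: mh_const.
apply: (@mh_ext _ _ _ _ (fun w => Finv beta (M + n).+1 w *m Tr beta M n w)) => //.
apply: mh_mul => //.
apply: (@mh_ext _ _ _ _ (fun w => cf w *: (1%:M - ('i / w) *: (Cm (M + n).+1 *m j)))) => //.
apply: mh_scale; first exact: sh_cf.
apply: mh_add; first exact: mh_const.
apply: (@mh_ext _ _ _ _ (fun w => (- ('i / w)) *: (Cm (M + n).+1 *m j))).
  by move=> w; rewrite scaleNr.
apply: mh_scale; last exact: mh_const.
apply: (@shR_ext _ _ (fun w => (-1) * ('i / w))); first by move=> w; rewrite mulN1r.
apply: shR_mul; [exact: shR_const | exact: sh_idiv].
Qed.


Lemma lt0_conv (x : C) : (0 < `|x|) = (0 < nc x).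
Proof. by rewrite normE; change ((0:R)%:C < (nc x)%:C = (0 < nc x)); rewrite ltcR. Qed.

Lemma ne_ball (w l c : C) : nc (w - l) < nc (l - c) -> w - c != 0.
Proof.
move=> H; apply/eqP => e; move: H; have -> : w = c by apply/eqP; rewrite -subr_eq0 e.
by rewrite ncB ltxx.
Qed.

Definition Rp M n (Rf Qf : C -> 'M[C]_p) (w : C) : 'M[C]_p :=
  usubmx (Pr beta M n w *m col_mx (Rf w) (Qf w)).
Definition Qp M n (Rf Qf : C -> 'M[C]_p) (w : C) : 'M[C]_p :=
  dsubmx (Pr beta M n w *m col_mx (Rf w) (Qf w)).

Lemma holo_fwd M n (Rf Qf : C -> 'M[C]_p) (w : C) : w != 0 ->
  mx_holo_at Rf w -> mx_holo_at Qf w ->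
  mx_holo_at (Rp M n Rf Qf) w /\ mx_holo_at (Qp M n Rf Qf) w.
Proof.
move=> w0 hR hQ.
have H : mx_holo_at (fun w => Pr beta M n w *m col_mx (Rf w) (Qf w)) w.
  by apply: mh_mul; [apply: mh_Pr | apply: mh_col].
by split; [apply: mh_usub H | apply: mh_dsub H].
Qed.

Lemma reg_fwd M n (Rf Qf : C -> 'M[C]_p) (l : C) : l != 0 ->
  mx_regular_at Rf l -> mx_regular_at Qf l ->
  mx_regular_at (Rp M n Rf Qf) l /\ mx_regular_at (Qp M n Rf Qf) l.
Proof.
move=> l0 [r1 [r10 H1]] [r2 [r20 H2]].
have l0' : 0 < nc l by rewrite nc_gt0.
have rr : 0 < Num.min r1 (Num.min r2 (nc l)) by rewrite !lt_min r10 r20 l0'.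
have P : forall w, `|w - l| < (Num.min r1 (Num.min r2 (nc l)))%:C ->
    mx_holo_at (Rp M n Rf Qf) w /\ mx_holo_at (Qp M n Rf Qf) w.
  move=> w; rewrite lt_conv !lt_min => /andP [h1 /andP [h2 h3]].
  apply: holo_fwd.
  - by have := ne_ball (c := 0) (w := w) (l := l); rewrite !subr0; apply.
  - by apply: H1; rewrite lt_conv.
  - by apply: H2; rewrite lt_conv.
split; exists (Num.min r1 (Num.min r2 (nc l))); split => // w hw; by have [] := P w hw.
Qed.


Lemma ident M n (Rf Qf : C -> 'M[C]_p) (w : C) :
  (forall k, (M < k <= M + n)%N -> beta k *m Jmx R p *m adjmx (beta k) = 1%:M) ->
  w != 0 -> w - 'i != 0 -> w - - 'i != 0 ->
  col_mx (Rf w) (Qf w) = Tr beta M n w *m col_mx (Rp M n Rf Qf w) (Qp M n Rf Qf w).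
Proof.
by move=> h w0 w1 w2; rewrite /Rp /Qp vsubmxK mulmxA TrPr // mul1mx.
Qed.

Lemma reg_bwd M n (Rf Qf : C -> 'M[C]_p) (l : C) :
  (forall k, (M < k <= M + n)%N -> beta k *m Jmx R p *m adjmx (beta k) = 1%:M) ->
  l != 0 -> l - 'i != 0 -> l - - 'i != 0 ->
  mx_regular_at (Rp M n Rf Qf) l -> mx_regular_at (Qp M n Rf Qf) l ->
  mx_regular_at Rf l /\ mx_regular_at Qf l.
Proof.
move=> h l0 l1 l2 [r1 [r10 H1]] [r2 [r20 H2]].
pose r := Num.min r1 (Num.min r2 (Num.min (nc (l - 0)) (Num.min (nc (l - 'i)) (nc (l - - 'i))))).
have r0 : 0 < r by rewrite !lt_min r10 r20 !nc_gt0 subr0 l0 l1 l2.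
have Hb : forall w, nc (w - l) < r ->
    [/\ mx_holo_at (Rp M n Rf Qf) w, mx_holo_at (Qp M n Rf Qf) w,
        w != 0, w - 'i != 0 & w - - 'i != 0].
  move=> w; rewrite !lt_min => /andP [h1 /andP [h2 /andP [h3 /andP [h4 h5]]]].
  split; [apply: H1; rewrite lt_conv // | apply: H2; rewrite lt_conv // | | |].
  - by have := ne_ball h3; rewrite subr0.
  - exact: ne_ball h4.
  - exact: ne_ball h5.
have P : forall w, nc (w - l) < r -> mx_holo_at (fun w => col_mx (Rf w) (Qf w)) w.
  move=> w hw; have [hR hQ w0 w1 w2] := Hb w hw.
  have rho : 0 < r - nc (w - l) by rewrite subr_gt0.
  apply: (@mh_ball _ _ _ _ (fun w => Tr beta M n w *m col_mx (Rp M n Rf Qf w) (Qp M n Rf Qf w)) _ _ rho) => [w' hw'|].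
    have : nc (w' - l) < r.
      have := ncD (w' - w) (w - l); have -> : w' - w + (w - l) = w' - l by ring.
      move=> hh; apply: le_lt_trans hh _; rewrite -ltrBrDr //.
    by move/Hb => [_ _ v0 v1 v2]; apply: ident.
  apply: mh_mul; first exact: mh_Tr.
  exact: mh_col.
split; exists r; split => // w; rewrite lt_conv => hw.
  apply: (@mh_ext _ _ _ _ (fun w => usubmx (col_mx (Rf w) (Qf w)))).
    by move=> w'; rewrite col_mxKu.
  exact: mh_usub (P w hw).
apply: (@mh_ext _ _ _ _ (fun w => dsubmx (col_mx (Rf w) (Qf w)))).
  by move=> w'; rewrite col_mxKd.
exact: mh_dsub (P w hw).
Qed.


Lemma usubZ m1 m2 n (c : C) (A : 'M[C]_(m1 + m2, n)) : usubmx (c *: A) = c *: usubmx A.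
Proof. by apply/matrixP => i k; rewrite !mxE. Qed.
Lemma dsubZ m1 m2 n (c : C) (A : 'M[C]_(m1 + m2, n)) : dsubmx (c *: A) = c *: dsubmx A.
Proof. by apply/matrixP => i k; rewrite !mxE. Qed.

Lemma expK (x : C) k1 k2 : x != 0 -> x ^- (k1 + k2) * x ^+ k2 = x ^- k1.
Proof. by move=> x0; rewrite exprD invfM -mulrA mulVf ?mulr1 // expf_neq0. Qed.

Lemma mero_fwd M n (Rf Qf : C -> 'M[C]_p) :
  mx_mero_on (@lowerHP R) Rf -> mx_mero_on (@lowerHP R) Qf ->
  mx_mero_on (@lowerHP R) (Rp M n Rf Qf) /\ mx_mero_on (@lowerHP R) (Qp M n Rf Qf).
Proof.
move=> mR mQ.
suff H : forall z0, lowerHP z0 -> exists (k : nat) (r : R) (Y : C -> 'M[C]_(p + p, p)),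
    0 < r /\ (forall w : C, `|w - z0| < r%:C -> mx_holo_at Y w) /\
    (forall w : C, 0 < `|w - z0| < r%:C ->
       Pr beta M n w *m col_mx (Rf w) (Qf w) = (w - z0) ^- k *: Y w).
  split => z0 hz0; have [k [r [Y [r0 [HY EY]]]]] := H z0 hz0.
    exists k, r, (fun w => usubmx (Y w)); split => //; split.
      by move=> w hw; apply: mh_usub; apply: HY.
    by move=> w hw; rewrite /Rp EY // usubZ.
  exists k, r, (fun w => dsubmx (Y w)); split => //; split.
    by move=> w hw; apply: mh_dsub; apply: HY.
  by move=> w hw; rewrite /Qp EY // dsubZ.
move=> z0 hz0.
have [k1 [r1 [G1 [r10 [HG1 E1]]]]] := mR z0 hz0.
have [k2 [r2 [G2 [r20 [HG2 E2]]]]] := mQ z0 hz0.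
have z00 : z0 != 0.
  by apply: contraTneq hz0 => ->; rewrite /lowerHP /= ltxx.
pose r := Num.min r1 (Num.min r2 (nc (z0 - 0))).
have r0 : 0 < r by rewrite !lt_min r10 r20 nc_gt0 subr0.
exists (k1 + k2)%N, r,
  (fun w => Pr beta M n w *m col_mx ((w - z0) ^+ k2 *: G1 w) ((w - z0) ^+ k1 *: G2 w)).
split => //; split.
  move=> w; rewrite lt_conv !lt_min => /andP [h1 /andP [h2 h3]].
  apply: mh_mul.
    by apply: mh_Pr; have := ne_ball h3; rewrite subr0.
  have sx : forall k, shR (fun w => (w - z0) ^+ k) w.
    by move=> k; apply: shR_exp; apply: shR_add; [apply: shR_id | apply: shR_const].
  apply: mh_col; apply: mh_scale => //; [apply: HG1 | apply: HG2]; by rewrite lt_conv.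
move=> w /andP [hw1 hw2].
have x0 : w - z0 != 0 by rewrite -normr_gt0.
move: hw2; rewrite lt_conv !lt_min => /andP [h1 /andP [h2 h3]].
rewrite E1 ?E2 ?hw1 ?lt_conv //=.
have -> : col_mx ((w - z0) ^- k1 *: G1 w) ((w - z0) ^- k2 *: G2 w) =
   (w - z0) ^- (k1 + k2) *: col_mx ((w - z0) ^+ k2 *: G1 w) ((w - z0) ^+ k1 *: G2 w).
  by rewrite scale_col_mx !scalerA expK // addnC expK.
by rewrite scalemxAr.
Qed.

End M2.

Lemma subU (R : realType) p (A : 'M[R[i]]_(p + p)) (X Y : 'M[R[i]]_p) :
  ulsubmx A *m X + ursubmx A *m Y = usubmx (A *m col_mx X Y).
Proof. by rewrite -{3}[A]submxK mul_block_col col_mxKu. Qed.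
Lemma subD (R : realType) p (A : 'M[R[i]]_(p + p)) (X Y : 'M[R[i]]_p) :
  dlsubmx A *m X + drsubmx A *m Y = dsubmx (A *m col_mx X Y).
Proof. by rewrite -{3}[A]submxK mul_block_col col_mxKd. Qed.

Unset Implicit Arguments.

Theorem proposition5p7 (R : realType) (p : nat) (M N : nat)
  (beta : nat -> 'M[R[i]]_(p, p + p)) :
  (0 < p)%N -> (M < N)%N ->
  (forall k, (k <= N)%N ->
     beta k *m Jmx R p *m adjmx (beta k) = 1%:M) ->
  forall phi : R[i] -> 'M[R[i]]_p,
    WeylSet beta N phi -> WeylSet beta M phi.
Proof.
move=> p0 MN hb phi [Hphi [Rf [Qf [mR [mQ [rR [rQ [Hpos [S [dS HS]]]]]]]]]].
set n := (N - M)%N.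
have eN : N = (M + n)%N by rewrite /n subnKC // ltnW.
have h : forall k, (M < k <= M + n)%N -> beta k *m Jmx R p *m adjmx (beta k) = 1%:M.
  by move=> k /andP [_ b]; apply: hb; rewrite eN.
have [mR' mQ'] := mero_fwd beta M n mR mQ.
have mi0 : (- 'i : R[i]) != 0 by rewrite oppr_eq0 i_neq0.
have [rR' rQ'] := reg_fwd beta M n mi0 rR rQ.
have nz : forall l : R[i], lowerHP l -> l != 0.
  by move=> l hl; apply: contraTneq hl => ->; rewrite /lowerHP /= ltxx.
split => //.
exists (Rp beta M n Rf Qf), (Qp beta M n Rf Qf).
split => //; split => //; split => //; split => //; split.
  move=> l hl rl ql.
  have [rl' ql'] : mx_regular_at Rf l /\ mx_regular_at Qf l.
    case: (eqVneq l (- 'i)) => [-> | lni]; first by [].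
    apply: (reg_bwd h) => //; first exact: nz.
      apply: contraTneq hl => /eqP; rewrite subr_eq0 => /eqP ->.
      by rewrite /lowerHP /= ltNge ler01.
    by rewrite subr_eq0.
  have [pd ps] := Hpos l hl rl' ql'.
  exact: pos_transfer h hl pd ps.
exists S; split => // l hl nS.
have [rl [ql rest]] := HS l hl nS.
have [rl' ql'] := reg_fwd beta M n (nz l hl) rl ql.
split => //; split => //.
have E : calW beta M l *m col_mx (Rp beta M n Rf Qf l) (Qp beta M n Rf Qf l) =
   calW beta N l *m col_mx (Rf l) (Qf l).
  by rewrite /Rp /Qp vsubmxK mulmxA -calW_Pr -eN.
by rewrite /= !subU !subD E -!subU -!subD.
Qed.
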